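(* Let $q$ be an odd prime power, and let $n,k,\ell$ be integers with $\ell\ge 0$ and $2\le k\le n-(\ell+1)$ (so $0\le \ell\le n-k-1$). Let $\boldsymbol{\alpha}=(\alpha_1,\dots,\alpha_n)\in\mathbb{F}_q^n$ with pairwise distinct entries, $\boldsymbol{v}=(v_1,\dots,v_n)\in(\mathbb{F}_q^{*})^n$, and $\boldsymbol{\eta}=(\eta_0,\dots,\eta_\ell)\in\mathbb{F}_q^{\ell+1}\setminus\{\boldsymbol 0\}$. Let $\mathcal{C}$ be the $( * )$-$(\mathcal{L},\mathcal{P})$-TGRS code defined in the context. Then the $(n-k)\times n$ matrix $\boldsymbol{H}$ whose $j$-th column ($1\le j\le n$) is $$\frac{u_j}{v_j}\Big(1,\ \alpha_j,\ \dots,\ \alpha_j^{\,n-k-(\ell+2)},\ \alpha_j^{\,n-k-(\ell+1)}-(-1)^{n-1}P_j\Omega_{\ell+1},\ \alpha_j^{\,n-k-\ell}-(-1)^{n-1}P_j\Omega_{\ell},\ \dots,\ \alpha_j^{\,n-k-1}-(-1)^{n-1}P_j\Omega_{1}\Big)^{T}$$ (i.e. rows $0,\dots,n-k-(\ell+2)$ are $(\frac{u_j}{v_j}\alpha_j^{i})_j$, and for $1\le r\le \ell+1$ the row indexed $n-k-r$ is $\big(\frac{u_j}{v_j}(\alpha_j^{\,n-k-r}-(-1)^{n-1}P_j\Omega_r)\big)_j$) is a parity-check matrix of $\mathcal{C}$; that is, $\operatorname{rank}\boldsymbol{H}=n-k$ and $\boldsymbol{G}\boldsymbol{H}^{T}=\boldsymbol{0}$,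 where $\boldsymbol{G}$ is the generator matrix of $\mathcal{C}$ given in the context. Here $$\Omega_r=\sum_{t=0}^{\ell}\eta_t\,S_{t+1-r}(\alpha_1,\dots,\alpha_n),\qquad 1\le r\le \ell+1.$$
   Context: $P_j=\prod_{i=1,i\neq j}^{n}\alpha_i$ and $P=\prod_{i=1}^n\alpha_i$; $u_j=\prod_{i=1,i\neq j}^{n}(\alpha_j-\alpha_i)^{-1}$ for $1\le j\le n$. For an integer $t$, $S_t(x_1,\dots,x_n)$ is the complete homogeneous symmetric polynomial of degree $t$: $S_t=0$ if $t<0$, and $S_t=\sum_{t_1+\dots+t_n=t,\ t_i\ge0}x_1^{t_1}\cdots x_n^{t_n}$ if $t\ge0$ (so $S_0=1$). The $( * )$-$(\mathcal{L},\mathcal{P})$-TGRS code is $\mathcal{C}=\{(v_1f(\alpha_1),\dots,v_nf(\alpha_n)) : f\in\mathcal{F}_{n,k,\boldsymbol\eta}\}$, where $\mathcal{F}_{n,k,\boldsymbol\eta}=\{\sum_{i=0}^{k-1}f_ix^i+f_0\sum_{j=0}^{\ell}\eta_jx^{k+j} : f_i\in\mathbb{F}_q\}$. Its generator matrix is the $k\times n$ matrix $\boldsymbol G$ whose first row is $\big(v_j(1+\sum_{t=0}^{\ell}\eta_t\alpha_j^{k+t})\big)_{j=1}^n$ and whose row $i$ ($1\le i\le k-1$) is $(v_j\alpha_j^{i})_{j=1}^n$. A parity-check matrix of a linear $[n,k]$ code is a full-rank $(n-k)\times n$ matrix whose null space is the code. *)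

(* Defs.v *)
From HB Require Import structures.
From mathcomp Require Import all_boot all_order all_algebra.
Set Implicit Arguments. Unset Strict Implicit. Unset Printing Implicit Defensive.
Import Order.TTheory GRing.Theory.
Local Open Scope ring_scope.

Section TGRS.
Variables (F : fieldType) (n : nat).

Definition Pj (alpha : 'I_n -> F) (j : 'I_n) : F :=
  \prod_(i < n | i != j) alpha i.

Definition Pall (alpha : 'I_n -> F) : F := \prod_(i < n) alpha i.

Definition uj (alpha : 'I_n -> F) (j : 'I_n) : F :=
  \prod_(i < n | i != j) (alpha j - alpha i)^-1.

Definition hsym (t : int) (x : 'I_n -> F) : F :=
  match t with
  | Posz m => \sum_(e : {ffun 'I_n -> 'I_m.+1} | (\sum_(i < n) (e i : nat))%N == m)
                \prod_(i < n) x i ^+ (e i : nat)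
  | Negz _ => 0
  end.

Definition Omega (l : nat) (eta : 'I_l.+1 -> F) (alpha : 'I_n -> F) (r : nat) : F :=
  \sum_(t < l.+1) eta t * hsym ((t.+1)%:Z - r%:Z) alpha.

Definition tgrsG (k l : nat) (eta : 'I_l.+1 -> F) (alpha v : 'I_n -> F)
  : 'M[F]_(k, n) :=
  \matrix_(i < k, j < n)
    (v j * (if (i : nat) == 0%N
            then 1 + \sum_(t < l.+1) eta t * alpha j ^+ (k + t)
            else alpha j ^+ i)).

Definition tgrsH (k l : nat) (eta : 'I_l.+1 -> F) (alpha v : 'I_n -> F)
  : 'M[F]_(n - k, n) :=
  \matrix_(i < n - k, j < n)
    (uj alpha j / v j *
      (if (i + l + 2 <= n - k)%N then alpha j ^+ i
       else alpha j ^+ i - (-1) ^+ n.-1 * Pj alpha j * Omega eta alpha (n - k - i))).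

End TGRS.

(* Main.v *)
Require Import Defs.
From HB Require Import structures.
From mathcomp Require Import all_boot all_order all_algebra zify ring.
Set Implicit Arguments. Unset Strict Implicit. Unset Printing Implicit Defensive.
Import Order.TTheory GRing.Theory Num.Theory.
Local Open Scope ring_scope.

Section Rev.
Variable F : fieldType.

Lemma size_prodX (I : Type) (r : seq I) (P : pred I) (a : I -> F) :
  size (\prod_(x <- r | P x) ('X - (a x)%:P)) = (count P r).+1.
Proof. by rewrite -big_filter size_prod_XsubC size_filter. Qed.

Lemma lead_prodX (I : Type) (r : seq I) (P : pred I) (a : I -> F) :
  (\prod_(x <- r | P x) ('X - (a x)%:P))`_(count P r) = 1.
Proof.
have := lead_coef_prod_XsubC r P a.
by rewrite lead_coefE size_prodX.
Qed.

Lemma coef_1aX (a : F) (p : {poly F}) i :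
  ((1 - a%:P * 'X) * p)`_i = p`_i - a * (if i == 0%N then 0 else p`_i.-1).
Proof. by rewrite mulrBl mul1r coefB -mulrA coefCM coefXM. Qed.

Lemma coef_Xa (a : F) (p : {poly F}) i :
  (('X - a%:P) * p)`_i = (if i == 0%N then 0 else p`_i.-1) - a * p`_i.
Proof. by rewrite mulrBl coefB coefXM coefCM. Qed.

Lemma rev_prod (I : Type) (r : seq I) (P : pred I) (a : I -> F) i :
  (\prod_(x <- r | P x) (1 - (a x)%:P * 'X))`_i =
  if (i <= count P r)%N
  then (\prod_(x <- r | P x) ('X - (a x)%:P))`_(count P r - i) else 0.
Proof.
elim: r i => [|x r IH] i.
  by rewrite !big_nil /= coef1 coefC; case: i.
rewrite !big_cons /=; case: (P x) => /=; last by rewrite add0n IH.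
rewrite coef_1aX coef_Xa !IH add1n.
set L := \prod_(_ <- _ | _) _.
set N := count P r.
have LN : L`_N = 1 by apply: lead_prodX.
have LN1 : L`_N.+1 = 0.
  by apply: nth_default; rewrite size_prodX.
case: i => [|i] /=.
  by rewrite subn0 LN LN1 mulr0 !subr0.

rewrite subSS.
case: (ssrnat.ltngtP i N) => iN.
- have h1 : (N - i == 0)%N = false by rewrite subn_eq0 leqNgt iN.
  have h2 : (i <= N)%N by rewrite ltnW.
  have h3 : (i < N.+1)%N by rewrite ltnS.

  rewrite (ifT _ _ h3) (ifF _ _ h1).
  by rewrite subnS.
- have h : (i < N.+1)%N = false by rewrite ltnS leqNgt iN.
  by rewrite (ifF _ _ h) mulr0 subr0.
- by subst i; rewrite (ifT _ _ (ltnSn N)) subnn /=.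
Qed.

End Rev.

Section S.
Variables (F : fieldType) (n : nat) (alpha : 'I_n -> F).
Hypothesis inj : injective alpha.
Hypothesis n_gt0 : (0 < n)%N.

Definition Lp (j : 'I_n) := \prod_(i < n | i != j) ('X - (alpha i)%:P).

Lemma uj_eq j : uj alpha j = (\prod_(i < n | i != j) (alpha j - alpha i))^-1.
Proof. by rewrite /uj prodfV. Qed.

Lemma prod_neq0 j : \prod_(i < n | i != j) (alpha j - alpha i) != 0.
Proof.
apply/prodf_neq0 => i ij; rewrite subr_eq0; apply/eqP => /inj E.
by rewrite E eqxx in ij.
Qed.

Lemma uj_neq0 j : uj alpha j != 0.
Proof. by rewrite uj_eq invr_eq0 prod_neq0. Qed.

Lemma Lp_alpha j : (Lp j).[alpha j] * uj alpha j = 1.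
Proof.
rewrite uj_eq /Lp horner_prod.
under eq_bigr do rewrite hornerXsubC.
by rewrite mulfV // prod_neq0.
Qed.

Lemma Lp_other j k : k != j -> (Lp j).[alpha k] = 0.
Proof.
move=> kj; rewrite /Lp horner_prod (bigD1 k) //= hornerXsubC subrr mul0r //.
Qed.

Lemma size_Lp j : size (Lp j) = n.
Proof.
rewrite /Lp size_prod /=; last by move=> i _; rewrite polyXsubC_eq0.
rewrite (eq_bigr (fun=> (2 * 1)%N)); last by move=> i _; rewrite size_XsubC.
rewrite -big_distrr /= sum1_card cardC1 card_ord /=.
by case: (n) n_gt0 => // m _; rewrite mul2n -addnn -addSn addnK.
Qed.

Lemma coef_Lp j : (Lp j)`_n.-1 = 1.
Proof.
have := lead_coef_prod_XsubC (index_enum 'I_n) (fun i => i != j) alpha.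
by rewrite lead_coefE -/(Lp j) size_Lp.
Qed.

Lemma interp (p : {poly F}) : (size p <= n)%N ->
  p = \sum_j (p.[alpha j] * uj alpha j) *: Lp j.
Proof.
move=> sp; apply/eqP; rewrite -subr_eq0; apply/eqP.
apply: (@roots_geq_poly_eq0 _ _ [seq alpha i | i <- enum 'I_n]).
- apply/allP => x /mapP [k _ ->]; rewrite rootE hornerD hornerN horner_sum.
  rewrite (bigD1 k) //= big1 ?addr0.
    by rewrite hornerZ -mulrA mulrC (mulrC (uj _ _)) Lp_alpha mul1r subrr.
  by move=> i ik; rewrite hornerZ Lp_other ?mulr0 // eq_sym.
- by rewrite map_inj_uniq ?enum_uniq.
- rewrite size_map size_enum_ord.
  apply: leq_trans (size_add _ _) _; rewrite geq_max sp size_opp /=.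
  apply: (big_ind (fun q : {poly F} => size q <= n)%N) => //.
  + by rewrite size_poly0.
  + by move=> x y hx hy; apply: leq_trans (size_add _ _) _; rewrite geq_max hx.
  + by move=> i _; apply: leq_trans (size_scale_leq _ _) _; rewrite size_Lp.
Qed.

Lemma size_polyXn_le m : (m < n)%N -> (size ('X^m : {poly F}) <= n)%N.
Proof. by rewrite size_polyXn. Qed.

Lemma S1_small m : (m < n)%N ->
  \sum_j uj alpha j * alpha j ^+ m = (m == n.-1)%:R.
Proof.
move=> mn; have E := @interp ('X^m : {poly F}) (size_polyXn_le mn).
have := congr1 (fun q : {poly F} => q`_n.-1) E.
rewrite coefXn eq_sym coef_sum => ->; apply: eq_bigr => j _.
by rewrite coefZ coef_Lp mulr1 hornerXn mulrC.
Qed.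

Lemma S2_zero : \sum_j uj alpha j * \prod_(i < n | i != j) (- alpha i) = 1.
Proof.
have s1 : (size (1%R : {poly F}) <= n)%N by rewrite size_poly1.
have E := interp s1.
symmetry; transitivity ((1 : {poly F}).[0]); first by rewrite hornerC.
rewrite [X in X.[0]]E horner_sum.
apply: eq_bigr => j _; rewrite hornerZ hornerC mul1r /Lp horner_prod.
by congr (uj alpha j * _); apply: eq_bigr => i _; rewrite hornerXsubC sub0r.
Qed.

Definition Rp (j : 'I_n) := \prod_(i < n | i != j) (1 - (alpha i)%:P * 'X).

Lemma coef_Rp j s :
  (Rp j)`_s = if (s <= n.-1)%N then (Lp j)`_(n.-1 - s) else 0.
Proof.
have hc : count (fun i => i != j) (index_enum 'I_n) = n.-1.
  by have := size_Lp j; rewrite /Lp size_prodX => /(congr1 predn).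
by rewrite /Rp rev_prod hc.
Qed.

Lemma sumRp : \sum_j (alpha j ^+ n.-1 * uj alpha j) *: Rp j = 1.
Proof.
have hs : (n.-1 < n)%N by rewrite prednK.
have E := @interp ('X^(n.-1) : {poly F}) (size_polyXn_le hs).
apply/polyP => s; rewrite coef_sum coef1.
case sn: (s <= n.-1)%N.
- transitivity (('X^(n.-1) : {poly F})`_(n.-1 - s)).
    rewrite [in RHS]E coef_sum; apply: eq_bigr => j _.
    by rewrite !coefZ coef_Rp sn hornerXn.
  rewrite coefXn; congr (_ %:R).
  case: s sn => [|s] sn /=; first by rewrite subn0 eqxx.
  suff -> : ((n.-1 - s.+1)%N == n.-1) = false by [].
  apply/negbTE/eqP; lia.
- rewrite big1; last by move=> j _; rewrite coefZ coef_Rp sn mulr0.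
  by case: s sn.
Qed.

Definition Gs (M : nat) (a : F) : {poly F} := \sum_(s < M) (a%:P * 'X) ^+ s.

Lemma Gs_mul M a : (1 - a%:P * 'X) * Gs M a = 1 - (a%:P * 'X) ^+ M.
Proof.
have := subrXX 1 (a%:P * 'X) M; rewrite expr1n => ->; rewrite /Gs.
by congr (_ * _); apply: eq_bigr => i _; rewrite expr1n mul1r.
Qed.

Lemma yXn (a : F) s : (a%:P * 'X) ^+ s = (a ^+ s)%:P * 'X^s.
Proof. by rewrite exprMn rmorphXn. Qed.

Lemma coef_Gs M a t : (t < M)%N -> (Gs M a)`_t = a ^+ t.
Proof.
move=> tM; rewrite /Gs coef_sum (bigD1 (Ordinal tM)) //= big1.
  by rewrite yXn coefCM coefXn eqxx mulr1 addr0.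
move=> i /eqP ni; rewrite yXn coefCM coefXn.
case: eqP => [ti|]; last by rewrite mulr0.
by exfalso; apply: ni; apply: val_inj.
Qed.

Lemma one_plus (I : Type) (r : seq I) (P : pred I) (f : I -> {poly F}) M :
  (forall i, P i -> exists b, f i = 1 + 'X^M * b) ->
  exists B, \prod_(i <- r | P i) f i = 1 + 'X^M * B.
Proof.
move=> h; apply: (big_ind (fun p => exists B, p = 1 + 'X^M * B)) => //.
- by exists 0; rewrite mulr0 addr0.
- move=> x y [B1 ->] [B2 ->]; exists (B1 + B2 + 'X^M * B1 * B2).
  ring.
Qed.

Lemma cancel_low (R Q : {poly F}) M : R`_0 = 1 ->
  (forall t, (t < M)%N -> (R * Q)`_t = 0) -> forall t, (t < M)%N -> Q`_t = 0.
Proof.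
move=> R0 h; elim/ltn_ind => t IH tM.
have := h t tM; rewrite coefM big_ord_recl subn0 R0 mul1r big1 ?addr0 //.
move=> j _; rewrite lift0 IH ?mulr0 //; have := ltn_ord j; lia.
Qed.

Lemma hsym_coef m :
  hsym (Posz m) alpha = (\prod_(i < n) Gs m.+1 (alpha i))`_m.
Proof.
rewrite /Gs bigA_distr_bigA coef_sum /hsym big_mkcond; apply: eq_bigr => e _.
rewrite (eq_bigr (fun i => (alpha i ^+ e i)%:P * 'X^(e i))); last first.
  by move=> i _; rewrite yXn.
rewrite big_split /= -rmorph_prod prodrXr coefCM coefXn eq_sym.
by case: eqP; rewrite ?mulr1 ?mulr0.
Qed.

Lemma S1_hsym m :
  \sum_j uj alpha j * alpha j ^+ (m + n.-1) = hsym (Posz m) alpha.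
Proof.
set M := m.+1.
set c := fun j => alpha j ^+ n.-1 * uj alpha j.
set E := \sum_j c j *: Gs M (alpha j).
set P := \prod_(i < n) Gs M (alpha i).
set R := \prod_(i < n) (1 - (alpha i)%:P * 'X).
have R0 : R`_0 = 1.
  rewrite -horner_coef0 horner_prod big1 // => i _.
  by rewrite hornerD hornerN hornerC hornerCM hornerX mulr0 subr0.
have [B1 hRP] : exists B, R * P = 1 + 'X^M * B.
  rewrite /R /P -big_split /=; apply: one_plus => i _; rewrite Gs_mul yXn.
  by exists (- (alpha i ^+ M)%:P); rewrite mulrN (mulrC 'X^M).
have [B2 hRE] : exists B, R * E = 1 + 'X^M * B.
  exists (- \sum_j c j *: ((alpha j ^+ M)%:P * Rp j)).
  rewrite /E mulr_sumr.
  rewrite (eq_bigr (fun j => c j *: Rp j - 'X^M * (c j *: ((alpha j ^+ M)%:P * Rp j)))).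
    by rewrite sumrB -(@mulr_sumr _ _ _ _ _ 'X^M) mulrN sumRp.
  move=> j _; rewrite -scalerAr /R (bigD1 j) //= -/(Rp j).
  rewrite mulrAC Gs_mul yXn mulrBl mul1r scalerBr -scalerAr.
  by congr (_ - _); congr (_ *: _); ring.
have hlow := @cancel_low R (E - P) M R0.
have : (E - P)`_m = 0.
  apply: hlow => // t tM; rewrite mulrBr hRE hRP.
  have -> : 1 + 'X^M * B2 - (1 + 'X^M * B1) = 'X^M * (B2 - B1) by ring.
  by rewrite coefXnM tM.
rewrite coefB => /eqP; rewrite subr_eq0 => /eqP hEP.
rewrite hsym_coef -/M -/P -hEP /E coef_sum; apply: eq_bigr => j _.
by rewrite coefZ coef_Gs // /c exprD; ring.
Qed.
Lemma S2_gen m : (m <= n.-1)%N ->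
  \sum_j uj alpha j * \prod_(i < n | i != j) (- alpha i) * alpha j ^+ m
  = (m == 0%N)%:R.
Proof.
case: m => [|m] hm.
  transitivity (\sum_j uj alpha j * \prod_(i < n | i != j) (- alpha i)).
    by apply: eq_bigr => j _; rewrite expr0 mulr1.
  by rewrite S2_zero.
pose Kall := \prod_(i < n) (- alpha i).
transitivity (- Kall * \sum_j uj alpha j * alpha j ^+ m).
  rewrite mulr_sumr; apply: eq_bigr => j _.
  rewrite /Kall [in RHS](bigD1 j) //= exprS.
  set Q := \prod_(i < n | i != j) _.
  ring.
rewrite S1_small; last by lia.
have -> : (m == n.-1) = false by apply/negbTE/eqP; lia.
by rewrite mulr0.
Qed.

End S.

Lemma HK (F : fieldType) (n : nat) (alpha : 'I_n -> F) j :
  (-1) ^+ n.-1 * Pj alpha j = \prod_(i < n | i != j) (- alpha i).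
Proof.
have := prodrN (predC1 j) alpha; rewrite cardC1 card_ord => ->.
by [].
Qed.

Lemma hsym_neg (F : fieldType) (n : nat) (z : int) (x : 'I_n -> F) :
  (z < 0)%R -> hsym z x = 0.
Proof. by case: z. Qed.

Unset Implicit Arguments.

Theorem theorem3p1 (F : finFieldType) (n k l : nat)
  (alpha v : 'I_n -> F) (eta : 'I_l.+1 -> F) :
  odd #|F| ->
  (2 <= k)%N -> (k + l.+1 <= n)%N ->
  injective alpha ->
  (forall j, v j != 0) ->
  (exists t, eta t != 0) ->
  \rank (tgrsH k eta alpha v) = (n - k)%N /\
  tgrsG k eta alpha v *m (tgrsH k eta alpha v)^T = 0.
Proof.
move=> _ k2 kln inj vnz _.
have n_gt0 : (0 < n)%N by lia.
set u := uj alpha.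
pose K j := \prod_(i < n | i != j) - alpha i.
pose w (b : nat) := if (b + l + 2 <= n - k)%N then 0
                    else Omega eta alpha (n - k - b).
have HE : forall (b : 'I_(n - k)) j,
    tgrsH k eta alpha v b j = u j / v j * (alpha j ^+ b - K j * w b).
  move=> b j; rewrite mxE /w; case: ifP => _; first by rewrite mulr0 subr0.
  by rewrite HK.
have S1s := S1_small inj n_gt0.
have S2g := S2_gen inj n_gt0.
have uvnz : forall j, u j / v j != 0.
  by move=> j; rewrite mulf_neq0 ?invr_eq0 ?vnz ?uj_neq0.
split.
- have free : forall x : 'rV[F]_(n - k), x *m tgrsH k eta alpha v = 0 -> x = 0.
    move=> x hx.
    pose kap := \sum_(i < n - k) x 0 i * w i.
    have hj : forall j, \sum_(i < n - k) x 0 i * alpha j ^+ i - K j * kap = 0.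
      move=> j; have /matrixP /(_ 0 j) := hx; rewrite mxE [RHS]mxE.
      under eq_bigr => i _ do rewrite HE.
      have -> : \sum_(i < n - k) x 0 i * (u j / v j * (alpha j ^+ i - K j * w i))
          = u j / v j * (\sum_(i < n - k) x 0 i * alpha j ^+ i - K j * kap).
        rewrite mulrBr mulr_sumr /kap [K j * _]mulr_sumr mulr_sumr -sumrB.
        by apply: eq_bigr => i _; ring.
      by move/eqP; rewrite mulf_eq0 (negPf (uvnz j)) /= => /eqP.
    have kap0 : kap = 0.
      have : \sum_j u j * (\sum_(i < n - k) x 0 i * alpha j ^+ i - K j * kap) = 0.
        by rewrite big1 // => j _; rewrite hj mulr0.
      rewrite (eq_bigr (fun j => \sum_(i < n - k) x 0 i * (u j * alpha j ^+ i)
                  - kap * (u j * K j * alpha j ^+ 0))); last first.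
        move=> j _; rewrite mulrBr mulr_sumr expr0; congr (_ - _); last by ring.
        by apply: eq_bigr => i _; ring.
      rewrite sumrB exchange_big /= -mulr_sumr S2g // big1 ?sub0r => [|i _].
        by move/eqP; rewrite oppr_eq0 mulr1 => /eqP.
      rewrite -mulr_sumr S1s; last by have := ltn_ord i; lia.
      suff -> : ((i : nat) == n.-1) = false by rewrite mulr0.
      by apply/negbTE/eqP; have := ltn_ord i; lia.
    pose p := \sum_(i < n - k) x 0 i *: ('X^i : {poly F}).
    have sp : (size p <= n)%N.
      apply: (big_ind (fun q : {poly F} => size q <= n)%N).
      + by rewrite size_poly0.
      + by move=> q1 q2 h1 h2; apply: leq_trans (size_add _ _) _; rewrite geq_max h1.
      + move=> i _; apply: leq_trans (size_scale_leq _ _) _; rewrite size_polyXn.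
        by have := ltn_ord i; lia.
    have pv : forall j, p.[alpha j] = 0.
      move=> j; have := hj j; rewrite kap0 mulr0 subr0 => <-.
      by rewrite /p horner_sum; apply: eq_bigr => i _; rewrite hornerZ hornerXn.
    have p0 : p = 0.
      by rewrite (interp inj n_gt0 sp) big1 // => j _; rewrite pv mul0r scale0r.
    apply/rowP => i; rewrite mxE.
    have := congr1 (fun q : {poly F} => q`_i) p0.
    rewrite coef0 /p coef_sum (bigD1 i) //= big1 ?addr0.
      by rewrite coefZ coefXn eqxx mulr1.
    move=> i' /negPf ni; rewrite coefZ coefXn.
    suff -> : ((i : nat) == i') = false by rewrite mulr0.
    by rewrite eq_sym; exact: ni.
  have kz : kermx (tgrsH k eta alpha v) = 0.
    apply/row_matrixP => i; rewrite row0; apply: free.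
    by rewrite -row_mul mulmx_ker row0.
  have := mxrank_ker (tgrsH k eta alpha v); rewrite kz mxrank0 => h.
  have := rank_leq_row (tgrsH k eta alpha v); lia.
- apply/matrixP => a b; rewrite !mxE.
  pose g j := if (a : nat) == 0%N then 1 + \sum_(t < l.+1) eta t * alpha j ^+ (k + t)
              else alpha j ^+ a.
  rewrite (eq_bigr (fun j => u j * g j * (alpha j ^+ b - K j * w b))); last first.
    move=> j _; rewrite mxE [X in _ * X]mxE HE /g.
    move: (vnz j) (if _ then _ else _) (alpha j ^+ b - K j * w b) => vj G h.
    by field.
  have ha := ltn_ord a; have hb := ltn_ord b.
  case a0: ((a : nat) == 0%N).
  + rewrite (eq_bigr (fun i => (u i * alpha i ^+ b + \sum_(t < l.+1) eta t * (u i * alpha i ^+ (k + t + b)))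
        - w b * (u i * K i * alpha i ^+ 0 + \sum_(t < l.+1) eta t * (u i * K i * alpha i ^+ (k + t))))); last first.
      move=> i _; rewrite /g a0; set X := \sum_(t < l.+1) _.
      have e1 : \sum_(t < l.+1) eta t * (u i * alpha i ^+ (k + t + b)) = u i * alpha i ^+ b * X.
        by rewrite /X mulr_sumr; apply: eq_bigr => t _; rewrite exprD; ring.
      have e2 : \sum_(t < l.+1) eta t * (u i * K i * alpha i ^+ (k + t)) = u i * K i * X.
        by rewrite /X mulr_sumr; apply: eq_bigr => t _; ring.
      by rewrite e1 e2 expr0; ring.
    rewrite sumrB -mulr_sumr !big_split /= S2g // exchange_big /=.
    rewrite [X in _ - _ * (_ + X)]exchange_big /=.
    rewrite [X in _ - _ * (_ + X)]big1 ?addr0 => [|t _]; last first.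
      rewrite -mulr_sumr S2g; last by have := ltn_ord t; lia.
      suff -> : (k + t == 0)%N = false by rewrite mulr0.
      apply/negbTE; lia.
    rewrite S1s; last by lia.
    have -> : ((b : nat) == n.-1) = false by apply/negbTE/eqP; lia.
    rewrite add0r mulr1; apply/eqP; rewrite subr_eq0; apply/eqP.
    under eq_bigr => t _ do rewrite -mulr_sumr.
    rewrite /w; case: ifP => bl.
    * apply: big1 => t _; rewrite S1s; last by have := ltn_ord t; lia.
      suff -> : (k + t + b == n.-1)%N = false by rewrite ?mulr0.
      apply/negbTE/eqP; have := ltn_ord t; lia.
    * rewrite /Omega; apply: eq_bigr => t _; congr (_ * _).
      have ht := ltn_ord t.
      case: (leqP (n - k - b) t.+1) => tb.
      - rewrite subzn //.
        have -> : (k + t + b = (t.+1 - (n - k - b)) + n.-1)%N by lia.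
        exact: S1_hsym.
      - rewrite hsym_neg; last by rewrite subr_lt0 ltz_nat.
        rewrite S1s; last by lia.
        suff -> : (k + t + b == n.-1)%N = false by rewrite ?mulr0.
        apply/negbTE/eqP; lia.
  + rewrite (eq_bigr (fun i => u i * alpha i ^+ (a + b) - w b * (u i * K i * alpha i ^+ a))); last first.
      by move=> i _; rewrite /g a0 exprD; ring.
    rewrite sumrB -mulr_sumr S1s; last by lia.
    rewrite S2g; last by lia.
    rewrite a0; suff -> : ((a + b)%N == n.-1) = false by rewrite mulr0 subr0.
    apply/negbTE/eqP; lia.
Qed.
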